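(* Let $G$ be a directed graph on $V=\{v_1,\dots,v_n\}$ with edge set $E$. Let $\mathbb F$ be a field and $k\ge1$. Let $\chi:V\to\mathbb F^k$ be any map, and let $y_{ij}\in\mathbb F$ be scalars for all ordered pairs $(i,j)$. Let $E^+$ be a finite set of ordered pairs not in $E$ (inserted edges), and let $E^-\subseteq E$ (deleted edges). Let $G'$ be the directed graph on $V$ with edge set $(E\setminus E^-)\cup E^+$. Define $Q$, $S$, $F$, $\mathcal Z$ for $G$, and $\mathcal Z_{\mathrm{new}}$ for $G'$, as in the context. Let $I\subseteq[n]$ be the set of indices $i$ such that $v_i$ is an endpoint of an edge in $E^+\cup E^-$. Let $Q'=(Q[i,j])_{i,j\in I}$, and let $S'=(S[i])_{i\in I}$, $F'=(F[i])_{i\in I}$ be column vectors. Define the $I\times I$ matrix $\Delta$ by $\Delta[i,j]=y_{ij}$ if $(v_i,v_j)\in E^+$, $\Delta[i,j]=-y_{ij}$ if $(v_i,v_j)\in E^-$, and $\Delta[i,j]=0$ otherwise. Then $$\mathcal Z_{\mathrm{new}}=\mathcal Z+\sum_{i=1}^{k}F'^{T}\,\Delta\,(Q'\Delta)^{i-1}\,S',$$ where all matrix and vector products are taken over the (noncommutative) ring $\Lambda(\mathbb F^k)$, multiplying entries in left-to-right order.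
   Context: $\Lambda(\mathbb F^k)$ is the exterior algebra over $\mathbb F^k$, with product $\wedge$. A vector $v\in\mathbb F^k$ is identified with $\sum_i v[i]e_i\in\Lambda(\mathbb F^k)$, and field scalars commute with everything. A walk in a directed graph $H$ is a sequence $w=(w_1,\dots,w_s)$, $s\ge1$, of vertices with $(w_r,w_{r+1})$ an edge of $H$ for all $r<s$. Vertices may repeat. Its walk extensor is $$\chi(w)=\chi(w_1)\wedge y_{w_1w_2}\chi(w_2)\wedge\cdots\wedge y_{w_{s-1}w_s}\chi(w_s),$$ where $y_{v_av_b}$ means $y_{ab}$. Any walk with more than $k$ vertices has $\chi(w)=0$. For $H=G$, $Q[i,j]$ is the sum of $\chi(w)$ over all walks in $G$ from $v_i$ to $v_j$ with at most $k$ vertices (equivalently, over all walks). Further, $S[i]=\sum_jQ[i,j]$, $F[j]=\sum_iQ[i,j]$ and $\mathcal Z=\sum_{i,j}Q[i,j]$. The quantity $\mathcal Z_{\mathrm{new}}$ is the sum of $\chi(w)$ over all walks $w$ in $G'$ with at most $k$ vertices. *)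

(* Defs.v *)
From HB Require Import structures.
From mathcomp Require Import all_boot all_order all_algebra.
Set Implicit Arguments. Unset Strict Implicit. Unset Printing Implicit Defensive.
Import Order.TTheory GRing.Theory Num.Theory.
Local Open Scope ring_scope.

(* Exterior algebra Lambda(F^k): coordinates w.r.t. the basis e_A, A a subset
   of {0..k-1}, where e_A = e_{a_1} /\ ... /\ e_{a_m}, a_1 < ... < a_m,
   and e_emptyset = 1.  Addition / scaling are pointwise. *)
Notation ext F k := {ffun {set 'I_k} -> F} (only parsing).

Section Ext.
Variables (F : fieldType) (k : nat).

(* e_A /\ e_B = ext_sign A B e_(A u B) when A, B disjoint, 0 otherwise *)
Definition ext_sign (A B : {set 'I_k}) : F :=
  (-1) ^+ #|[set p : 'I_k * 'I_k | [&& p.1 \in A, p.2 \in B & (p.2 < p.1)%N]]|.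

Definition wedge (x y : ext F k) : ext F k :=
  [ffun C => \sum_(A : {set 'I_k}) \sum_(B : {set 'I_k} |
      [disjoint A & B] && (A :|: B == C)) ext_sign A B * x A * y B].

Definition ext_scale (c : F) (x : ext F k) : ext F k := [ffun A => c * x A].

Definition ext1 : ext F k := [ffun A => (A == set0)%:R].

Definition vec_ext (v : 'rV[F]_k) : ext F k :=
  [ffun A => \sum_(i : 'I_k | A == [set i]) v 0 i].
End Ext.

Section Walks.
Variables (F : fieldType) (k n : nat).
Variables (chi : 'I_n -> 'rV[F]_k) (y : 'I_n -> 'I_n -> F).

Definition is_walk (E : {set 'I_n * 'I_n}) (w : seq 'I_n) : bool :=
  if w is x :: r then path (fun a b => (a, b) \in E) x r else false.

(* chi(w1) /\ y_{w1w2} chi(w2) /\ ... /\ y_{w(s-1)ws} chi(ws), left to right *)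
Fixpoint wext_aux (acc : ext F k) (prev : 'I_n) (r : seq 'I_n) : ext F k :=
  if r is v :: r' then
    wext_aux (wedge acc (ext_scale (y prev v) (vec_ext (chi v)))) v r'
  else acc.

Definition walk_extensor (w : seq 'I_n) : ext F k :=
  if w is x :: r then wext_aux (vec_ext (chi x)) x r else 0.

Definition walk_sum (E : {set 'I_n * 'I_n}) (P : seq 'I_n -> bool) : ext F k :=
  \sum_(l < k) \sum_(t : (l.+1).-tuple 'I_n | is_walk E t && P t)
     walk_extensor t.

Definition Qmat (E : {set 'I_n * 'I_n}) (i j : 'I_n) : ext F k :=
  walk_sum E (fun w => (head i w == i) && (last i w == j)).

Definition Svec E (i : 'I_n) : ext F k := \sum_(j : 'I_n) Qmat E i j.
Definition Fvec E (j : 'I_n) : ext F k := \sum_(i : 'I_n) Qmat E i j.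
Definition Ztot E : ext F k := \sum_(i : 'I_n) \sum_(j : 'I_n) Qmat E i j.
Definition Zall E : ext F k := walk_sum E (fun _ => true).

(* I x I matrices over Lambda(F^k) represented as functions, products
   computed with wedge in left-to-right order, indices summed over I *)
Definition mmul (I : {set 'I_n}) (A B : 'I_n -> 'I_n -> ext F k) :=
  fun i j => \sum_(l in I) wedge (A i l) (B l j).

Definition Delta (Ep Em : {set 'I_n * 'I_n}) (i j : 'I_n) : ext F k :=
  if (i, j) \in Ep then ext_scale (y i j) (ext1 F k)
  else if (i, j) \in Em then ext_scale (- y i j) (ext1 F k) else 0.

Definition endpoints (Ep Em : {set 'I_n * 'I_n}) : {set 'I_n} :=
  [set v | [exists u, ((v, u) \in Ep :|: Em) || ((u, v) \in Ep :|: Em)]].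

(* Delta (Q' Delta)^m *)
Definition DQpow (E Ep Em : {set 'I_n * 'I_n}) (m : nat) :=
  iter m (fun M => mmul (endpoints Ep Em) M
                        (mmul (endpoints Ep Em) (Qmat E) (Delta Ep Em)))
       (Delta Ep Em).

(* F'^T Delta (Q' Delta)^m S' *)
Definition correction_term (E Ep Em : {set 'I_n * 'I_n}) (m : nat) : ext F k :=
  \sum_(a in endpoints Ep Em) \sum_(b in endpoints Ep Em)
     wedge (wedge (Fvec E a) (DQpow E Ep Em m a b)) (Svec E b).
End Walks.

(* Main.v *)
Require Import Defs.
From HB Require Import structures.
From mathcomp Require Import all_boot all_order all_algebra.
From mathcomp Require Import ring zify.
Set Implicit Arguments. Unset Strict Implicit. Unset Printing Implicit Defensive.
Import Order.TTheory GRing.Theory Num.Theory.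
Local Open Scope ring_scope.

Section Lam.
Variables (F : fieldType) (k : nat).
Local Notation ext := {ffun {set 'I_k} -> F}.

Lemma wedgeE (x y : ext) C : wedge x y C = \sum_(A : {set 'I_k}) \sum_(B : {set 'I_k})
   if [disjoint A & B] && (A :|: B == C) then ext_sign F A B * x A * y B else 0.
Proof. by rewrite ffunE; apply: eq_bigr => A _; rewrite big_mkcond. Qed.

Lemma wedgeDl : left_distributive (@wedge F k) +%R.
Proof.
move=> x y z; apply/ffunP => C; rewrite !ffunE -big_split; apply: eq_bigr => A _.
rewrite -big_split; apply: eq_bigr => B _ /=; rewrite !ffunE; ring.
Qed.

Lemma wedgeDr : right_distributive (@wedge F k) +%R.
Proof.
move=> x y z; apply/ffunP => C; rewrite !ffunE -big_split; apply: eq_bigr => A _.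
rewrite -big_split; apply: eq_bigr => B _ /=; rewrite !ffunE; ring.
Qed.

Lemma ext_sign0l (B : {set 'I_k}) : ext_sign F (set0 : {set 'I_k}) B = 1 :> F.
Proof.
rewrite /ext_sign; set S := [set _ | _].
suff -> : S = set0 by rewrite cards0 expr0.
by apply/setP => p; rewrite !inE.
Qed.

Lemma ext_sign0r (A : {set 'I_k}) : ext_sign F A (set0 : {set 'I_k}) = 1 :> F.
Proof.
rewrite /ext_sign; set S := [set _ | _].
suff -> : S = set0 by rewrite cards0 expr0.
by apply/setP => p; rewrite !inE /= andbF.
Qed.

Lemma wedge1l : left_id (ext1 F k) (@wedge F k).
Proof.
move=> x; apply/ffunP => C; rewrite wedgeE (bigD1 set0) //=.
rewrite [X in _ + X]big1 => [|A nA]; last first.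
  by apply: big1 => B _; rewrite ffunE (negbTE nA) mulr0 mul0r; case: ifP.
rewrite addr0 (bigD1 C) //= [X in _ + X]big1 => [|B nB]; last first.
  by rewrite set0U (negbTE nB) andbF.
by rewrite set0U eqxx disjoints_subset sub0set ext_sign0l ffunE eqxx addr0 !mul1r.
Qed.

Lemma wedge1r : right_id (ext1 F k) (@wedge F k).
Proof.
move=> x; apply/ffunP => C; rewrite wedgeE (bigD1 C) //= [X in _ + X]big1 => [|A nA]; last first.
  rewrite (bigD1 set0) //= [X in _ + X]big1 => [|B nB]; last by rewrite ffunE (negbTE nB) mulr0; case: ifP.
  by rewrite setU0 (negbTE nA) andbF addr0.
rewrite addr0 (bigD1 set0) //= [X in _ + X]big1 => [|B nB]; last first.
  by rewrite ffunE (negbTE nB) mulr0; case: ifP.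
by rewrite setU0 eqxx disjoint_sym disjoints_subset sub0set ext_sign0r ffunE eqxx addr0 mulr1 mul1r.
Qed.

Lemma ext_signUr (A B C : {set 'I_k}) : [disjoint B & C] ->
  ext_sign F A (B :|: C) = ext_sign F A B * ext_sign F A C.
Proof.
move=> dBC; rewrite /ext_sign -exprD; congr (_ ^+ _).
set S1 := [set p : 'I_k * 'I_k | [&& p.1 \in A, p.2 \in B & (p.2 < p.1)%N]].
set S2 := [set p : 'I_k * 'I_k | [&& p.1 \in A, p.2 \in C & (p.2 < p.1)%N]].
have -> : [set p : 'I_k * 'I_k | [&& p.1 \in A, p.2 \in B :|: C & (p.2 < p.1)%N]] = S1 :|: S2.
  by apply/setP => p; rewrite !inE; case: (p.1 \in A); case: (p.2 \in B); case: (p.2 \in C); case: (p.2 < p.1)%N.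
rewrite cardsU; suff -> : S1 :&: S2 = set0 by rewrite cards0 subn0.
apply/setP => p; rewrite !inE; case: (p.2 \in B) (disjointFr dBC (x := p.2)) => [-> //|]; by rewrite !andbF.
Qed.

Lemma ext_signUl (A B C : {set 'I_k}) : [disjoint A & B] ->
  ext_sign F (A :|: B) C = ext_sign F A C * ext_sign F B C.
Proof.
move=> dAB; rewrite /ext_sign -exprD; congr (_ ^+ _).
set S1 := [set p : 'I_k * 'I_k | [&& p.1 \in A, p.2 \in C & (p.2 < p.1)%N]].
set S2 := [set p : 'I_k * 'I_k | [&& p.1 \in B, p.2 \in C & (p.2 < p.1)%N]].
have -> : [set p : 'I_k * 'I_k | [&& p.1 \in A :|: B, p.2 \in C & (p.2 < p.1)%N]] = S1 :|: S2.
  by apply/setP => p; rewrite !inE; case: (p.1 \in A); case: (p.1 \in B); case: (p.2 \in C); case: (p.2 < p.1)%N.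
rewrite cardsU; suff -> : S1 :&: S2 = set0 by rewrite cards0 subn0.
apply/setP => p; rewrite !inE; case: (p.1 \in A) (disjointFr dAB (x := p.1)) => [-> //|] /=; by rewrite ?andbF.
Qed.

Lemma cond_assoc (A B C D : {set 'I_k}) :
 ([disjoint A :|: B & C] && (A :|: B :|: C == D)) && [disjoint A & B]
 = ([disjoint A & B :|: C] && (A :|: (B :|: C) == D)) && [disjoint B & C].
Proof.
rewrite -!setI_eq0 setIUl setIUr !setU_eq0 setUA.
by case: (A :&: B == set0); case: (A :&: C == set0); case: (B :&: C == set0);
  case: (A :|: B :|: C == D).
Qed.

Lemma sum_collapse (W : {set 'I_k}) (f : {set 'I_k} -> F) :
  (forall U, U != W -> f U = 0) -> \sum_U f U = f W.
Proof. by move=> h; rewrite (bigD1 W) //= big1 ?addr0. Qed.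

Lemma if_mid (b1 b2 : bool) (s t z : F) :
  (if b1 then s * (if b2 then t else 0) * z else 0) = if b1 && b2 then s * t * z else 0.
Proof. by case: b1; case: b2 => //=; rewrite mulr0 mul0r. Qed.

Lemma if_midr (b1 b2 : bool) (s t : F) :
  (if b1 then s * (if b2 then t else 0) else 0) = if b1 && b2 then s * t else 0.
Proof. by case: b1; case: b2 => //=; rewrite mulr0. Qed.

Lemma if_sum2 (b : bool) (s z : F) (f : {set 'I_k} -> {set 'I_k} -> F) :
  (if b then s * (\sum_A \sum_B f A B) * z else 0) =
  \sum_A \sum_B (if b then s * f A B * z else 0).
Proof.
case: b; last by rewrite big1 // => A _; rewrite big1.
rewrite mulr_sumr mulr_suml; apply: eq_bigr => A _.
by rewrite mulr_sumr mulr_suml.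
Qed.

Lemma if_sum2r (b : bool) (s : F) (f : {set 'I_k} -> {set 'I_k} -> F) :
  (if b then s * (\sum_A \sum_B f A B) else 0) =
  \sum_A \sum_B (if b then s * f A B else 0).
Proof.
case: b; last by rewrite big1 // => A _; rewrite big1.
rewrite mulr_sumr; apply: eq_bigr => A _.
by rewrite mulr_sumr.
Qed.

Lemma wedgeA : associative (@wedge F k).
Proof.
move=> x y z; apply/ffunP => D.
rewrite wedgeE.
under eq_bigr => A _ do under eq_bigr => V _ do rewrite wedgeE if_sum2r.
rewrite [RHS]wedgeE.
under [RHS]eq_bigr => U _ do under eq_bigr => Cc _ do rewrite wedgeE if_sum2.
under eq_bigr => A _ do rewrite exchange_big.
under eq_bigr => A _ do under eq_bigr => B _ do rewrite exchange_big.
under [RHS]eq_bigr => U _ do rewrite exchange_big.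
under [RHS]eq_bigr => U _ do under eq_bigr => A _ do rewrite exchange_big.
rewrite [RHS]exchange_big.
under [RHS]eq_bigr => A _ do rewrite exchange_big.
under [RHS]eq_bigr => A _ do under eq_bigr => B _ do rewrite exchange_big.
apply: eq_bigr => A _; apply: eq_bigr => B _; apply: eq_bigr => C _.
rewrite (@sum_collapse (B :|: C)) => [|V nV]; last first.
  by rewrite (eq_sym (B :|: C) V) (negbTE nV) andbF mulr0; case: ifP.
rewrite (@sum_collapse (A :|: B)) => [|U nU]; last first.
  by rewrite (eq_sym (A :|: B) U) (negbTE nU) andbF mulr0 mul0r; case: ifP.
rewrite !eqxx !andbT if_mid if_midr cond_assoc.
case: ifP => // /andP [/andP [d1 _] d2].
have d3 := disjointWr (subsetUl B C) d1.
rewrite ext_signUr // ext_signUl //; ring.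
Qed.
End Lam.

Section LamRing.
Variables (F : fieldType) (k : nat).
Definition Lam := {ffun {set 'I_k} -> F}.
HB.instance Definition _ := GRing.Zmodule.on Lam.
HB.instance Definition _ := GRing.Zmodule_isPzRing.Build Lam
  (@wedgeA F k) (@wedge1l F k) (@wedge1r F k) (@wedgeDl F k) (@wedgeDr F k).

Lemma mulLE (x y : Lam) : x * y = wedge x y. Proof. by []. Qed.
Lemma oneLE : (1 : Lam) = ext1 F k. Proof. by []. Qed.

Lemma wedge_scalel c (x y : Lam) : wedge (ext_scale c x) y = ext_scale c (wedge x y).
Proof.
apply/ffunP => C; rewrite !ffunE mulr_sumr; apply: eq_bigr => A _.
rewrite mulr_sumr; apply: eq_bigr => B _; rewrite !ffunE; ring.
Qed.

Lemma wedge_scaler c (x y : Lam) : wedge x (ext_scale c y) = ext_scale c (wedge x y).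
Proof.
apply/ffunP => C; rewrite !ffunE mulr_sumr; apply: eq_bigr => A _.
rewrite mulr_sumr; apply: eq_bigr => B _; rewrite !ffunE; ring.
Qed.

Definition sc (c : F) : Lam := ext_scale c (ext1 F k).

Lemma scE c (x : Lam) : ext_scale c x = sc c * x.
Proof. by rewrite mulLE /sc wedge_scalel wedge1l. Qed.

Lemma scC c (x : Lam) : sc c * x = x * sc c.
Proof. by rewrite !mulLE /sc wedge_scalel wedge_scaler wedge1l wedge1r. Qed.

Lemma scD a b : sc (a + b) = sc a + sc b.
Proof. by apply/ffunP => C; rewrite !ffunE mulrDl. Qed.
Lemma scN a : sc (- a) = - sc a.
Proof. by apply/ffunP => C; rewrite !ffunE mulNr. Qed.
Lemma sc0 : sc 0 = 0.
Proof. by apply/ffunP => C; rewrite !ffunE mul0r. Qed.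
Lemma sc1 : sc 1 = 1.
Proof. by apply/ffunP => C; rewrite !ffunE mul1r. Qed.

Definition Fm (m : nat) (x : Lam) := forall A : {set 'I_k}, (#|A| < m)%N -> x A = 0.

Lemma Fm0 m : Fm m 0. Proof. by move=> A _; rewrite ffunE. Qed.
Lemma FmD m x y : Fm m x -> Fm m y -> Fm m (x + y).
Proof. by move=> hx hy A hA; rewrite ffunE hx // hy // addr0. Qed.
Lemma FmN m x : Fm m x -> Fm m (- x).
Proof. by move=> hx A hA; rewrite ffunE hx // oppr0. Qed.
Lemma Fm_sum m (I : Type) (r : seq I) (P : pred I) (f : I -> Lam) :
  (forall i, P i -> Fm m (f i)) -> Fm m (\sum_(i <- r | P i) f i).
Proof.
move=> h; elim/big_rec: _ => [|i x Pi hx]; first exact: Fm0.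
exact: FmD (h _ Pi) hx.
Qed.
Lemma FmW m m' x : (m <= m')%N -> Fm m' x -> Fm m x.
Proof. by move=> le hx A hA; apply: hx; apply: leq_trans le. Qed.
Lemma Fm_any x : Fm 0 x. Proof. by []. Qed.

Lemma FmM a b x y : Fm a x -> Fm b y -> Fm (a + b) (x * y).
Proof.
move=> hx hy C hC; rewrite mulLE wedgeE big1 // => A _; rewrite big1 // => B _.
case: ifP => // /andP [dAB /eqP eC].
have cC : #|C| = (#|A| + #|B|)%N.
  by rewrite -eC cardsU (disjoint_setI0 dAB) cards0 subn0.
case: (ltnP #|A| a) => hA; first by rewrite hx // mulr0 mul0r.
rewrite hy ?mulr0 //; lia.
Qed.

Lemma Fm_sc m c x : Fm m x -> Fm m (sc c * x).
Proof. by move=> hx A hA; rewrite -scE ffunE hx // mulr0. Qed.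
Lemma Fm_scr m c x : Fm m x -> Fm m (x * sc c).
Proof. by move=> hx; rewrite -scC; apply: Fm_sc. Qed.

Lemma Fm_top x : Fm k.+1 x -> x = 0.
Proof.
move=> hx; apply/ffunP => A; rewrite ffunE hx //.
by rewrite ltnS (leq_trans (max_card _)) // card_ord.
Qed.

Lemma Fm_vec v : Fm 1 (vec_ext v).
Proof.
move=> A; rewrite ltnS leqn0 cards_eq0 => /eqP ->; rewrite ffunE big1 // => i.
by move/eqP/setP/(_ i); rewrite !inE eqxx.
Qed.
End LamRing.


Lemma sum_collapseT (T : finType) (R : nmodType) (a : T) (f : T -> R) :
  (forall x, x != a -> f x = 0) -> \sum_x f x = f a.
Proof. by move=> h; rewrite (bigD1 a) //= big1 ?addr0. Qed.

Lemma sum_tupleS (T : finType) (R : nmodType) m (f : seq T -> R) :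
  \sum_(t : m.+1.-tuple T) f t = \sum_(x : T) \sum_(t : m.-tuple T) f (x :: t).
Proof.
rewrite pair_big /=.
rewrite (reindex (fun p : T * m.-tuple T => [tuple of p.1 :: p.2])) //=.
exists (fun t : m.+1.-tuple T => (thead t, [tuple of behead t])).
  by move=> [x t] _ /=; rewrite theadE; congr pair; apply: val_inj.
by move=> t _ /=; rewrite [RHS]tuple_eta.
Qed.

Lemma sum_tuple0 (T : finType) (R : nmodType) (f : seq T -> R) :
  \sum_(t : 0.-tuple T) f t = f [::].
Proof.
by rewrite (@sum_collapseT _ _ [tuple]) // => t; rewrite tuple0 eqxx.
Qed.

Section Walk.
Variables (F : fieldType) (k n : nat).
Variables (chi : 'I_n -> 'rV[F]_k) (y : 'I_n -> 'I_n -> F).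
Local Notation L := (Lam F k).

Definition cv (i : 'I_n) : L := vec_ext (chi i).

Lemma wext_aux_mul (a b : L) p r :
  wext_aux chi y (a * b) p r = a * (wext_aux chi y b p r : L).
Proof.
elim: r a b p => [|v r IH] a b p //=.
by rewrite -mulLE -mulrA IH mulLE.
Qed.

Lemma wext_cons x v r :
  walk_extensor chi y [:: x, v & r] =
  (cv x * (@sc F k (y x v) * (walk_extensor chi y (v :: r) : L)) : L).
Proof.
rewrite /= -mulLE wext_aux_mul scE.
by rewrite wext_aux_mul.
Qed.

Definition Cm : 'M[L]_n := \matrix_(i, j) (if i == j then cv i else 0).
Definition Am (E : {set 'I_n * 'I_n}) : 'M[L]_n :=
  \matrix_(i, j) (if (i, j) \in E then @sc F k (y i j) else 0).
Definition Wt E l i j : L :=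
  \sum_(t : l.+1.-tuple 'I_n | is_walk E t && ((head i t == i) && (last i t == j)))
     walk_extensor chi y t.

Lemma mulE (A B : 'M[L]_n) i j : (A * B) i j = \sum_l A i l * B l j.
Proof. by rewrite -mulmxE mxE. Qed.

Definition fW E i j x (s : seq 'I_n) : L :=
  if is_walk E (x :: s) && ((x == i) && (last x s == j))
    then walk_extensor chi y (x :: s) else 0.

Lemma Wt_expand E l i j : Wt E l i j = \sum_x \sum_(r : l.-tuple 'I_n) fW E i j x r.
Proof.
rewrite /Wt big_mkcond (@sum_tupleS _ _ l (fun s : seq 'I_n =>
  if is_walk E s && ((head i s == i) && (last i s == j)) then walk_extensor chi y s : L else 0)).
done.
Qed.

Lemma Wt_pow E l i j : Wt E l i j = ((Cm * Am E) ^+ l * Cm) i j.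
Proof.
elim: l i j => [|l IH] i j.
  rewrite expr0 mul1r Wt_expand mxE.
  under eq_bigr => x _ do rewrite (sum_tuple0 (fW E i j x)) /fW /=.
  case: eqP => [->|nij].
    rewrite (@sum_collapseT _ _ j) ?eqxx // => x nx.
    by rewrite (negbTE nx) andbF.
  by rewrite big1 // => x _; case: eqP => // ->; case: eqP.
rewrite exprS -mulrA mulE Wt_expand.
under eq_bigr => x _ do rewrite (@sum_tupleS _ _ l (fW E i j x)) /fW.
rewrite (@sum_collapseT _ _ i) => [|x nx]; last first.
  by rewrite big1 // => v _; rewrite big1 // => r _; rewrite (negbTE nx) /= andbF.
apply: eq_bigr => v _.
rewrite -IH Wt_expand /fW (@sum_collapseT _ _ v) => [|x nx]; last first.
  by rewrite big1 // => r _; rewrite (negbTE nx) /= andbF.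
rewrite mulE (@sum_collapseT _ _ i) => [|u nu]; last by rewrite mxE eq_sym (negbTE nu) mul0r.
rewrite !mxE eqxx mulr_sumr; apply: eq_bigr => r _.
rewrite !eqxx wext_cons /=.
case: ((i, v) \in E); rewrite ?andbT /=.
  by case: ifP => _; rewrite ?mulr0 // mulrA.
by rewrite mulr0 mul0r.
Qed.
End Walk.


Section RingAlg.
Variable R : pzRingType.

Lemma swapX (a b : R) m : a * (b * a) ^+ m = (a * b) ^+ m * a.
Proof.
elim: m => [|m IH]; first by rewrite !expr0 mul1r mulr1.
by rewrite exprS [in RHS]exprS -!mulrA IH.
Qed.

Lemma powS_sw (a b : R) m : (a * b) ^+ m.+1 = a * (b * a) ^+ m * b.
Proof. by rewrite exprS -mulrA swapX mulrA. Qed.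

Lemma geom_inv (x : R) m : (1 - x) * \sum_(i < m) x ^+ i = 1 - x ^+ m
  /\ (\sum_(i < m) x ^+ i) * (1 - x) = 1 - x ^+ m.
Proof.
elim: m => [|m [IH1 IH2]]; first by rewrite big_ord0 expr0 mulr0 mul0r subrr.
rewrite big_ord_recr /=; split.
  by rewrite mulrDr IH1 mulrBl mul1r -exprS addrA subrK.
by rewrite mulrDl IH2 mulrBr mulr1 -exprSr addrA subrK.
Qed.

Lemma resolvent (C A A' Rr Rr' : R) :
  (1 - C * A) * Rr = 1 -> Rr' * (1 - C * A') = 1 ->
  Rr' * C = Rr * C + (Rr' * C) * (A' - A) * (Rr * C).
Proof.
move=> h1 h2.
have e1 : Rr' = Rr' * Rr - Rr' * C * A * Rr.
  by rewrite -[LHS]mulr1 -h1 mulrA mulrBr mulr1 mulrBl !mulrA.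
have e2 : Rr = Rr' * Rr - Rr' * C * A' * Rr.
  by rewrite -[LHS]mul1r -h2 mulrBr mulr1 mulrBl !mulrA.
have e : Rr' - Rr = Rr' * C * A' * Rr - Rr' * C * A * Rr.
  transitivity ((Rr' * Rr - Rr' * C * A * Rr) - (Rr' * Rr - Rr' * C * A' * Rr)).
    by rewrite -e1 -e2.
  by rewrite opprB addrC addrA subrK.
have -> : Rr' * C * (A' - A) * (Rr * C) = (Rr' - Rr) * C.
  by rewrite e mulrBr !mulrBl !mulrA.
by rewrite mulrBl addrC subrK.
Qed.
Lemma iter_res (X Q D : R) : X = Q + X * D * Q ->
  forall M, X = \sum_(m < M) Q * (D * Q) ^+ m + X * (D * Q) ^+ M.
Proof.
move=> h; elim => [|M IH]; first by rewrite big_ord0 expr0 mulr1 add0r.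
rewrite big_ord_recr /= -addrA {1}IH; congr (_ + _).
by rewrite {1}h mulrDl exprS !mulrA.
Qed.
End RingAlg.


Section MF.
Variables (F : fieldType) (k n : nat).
Local Notation L := (Lam F k).
Definition MF m (M : 'M[L]_n) := forall i j, Fm m (M i j).

Lemma MF_mul a b M N : MF a M -> MF b N -> MF (a + b) (M * N).
Proof.
by move=> hM hN i j; rewrite mulE; apply: Fm_sum => l _; apply: FmM.
Qed.
Lemma MF_add m M N : MF m M -> MF m N -> MF m (M + N).
Proof. by move=> hM hN i j; rewrite mxE; apply: FmD. Qed.
Lemma MF_W m m' M : (m <= m')%N -> MF m' M -> MF m M.
Proof. by move=> le hM i j; apply: FmW le _. Qed.
Lemma MF_any M : MF 0 M.
Proof. by move=> i j. Qed.
Lemma MF_pow m M : MF 1 M -> MF m (M ^+ m).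
Proof.
move=> hM; elim: m => [|m IH]; first exact: MF_any.
by rewrite exprS; apply: (MF_mul hM IH).
Qed.
Lemma MF_top M : MF k.+1 M -> M = 0.
Proof. by move=> hM; apply/matrixP => i j; rewrite mxE; apply: Fm_top. Qed.
End MF.

Section Main.
Variables (F : fieldType) (k n : nat).
Variables (chi : 'I_n -> 'rV[F]_k) (y : 'I_n -> 'I_n -> F).
Local Notation L := (Lam F k).
Local Notation Cm := (Cm chi).
Local Notation Am := (@Am F k n y).

Lemma MF_Cm : MF 1 Cm.
Proof.
move=> i j; rewrite mxE; case: eqP => _; first exact: Fm_vec.
exact: Fm0.
Qed.

Lemma MF_N E : MF 1 (Cm * Am E).
Proof. by rewrite -[1%N]addn0; apply: MF_mul MF_Cm (MF_any _). Qed.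

Definition QMt E : 'M[L]_n := \sum_(l < k) (Cm * Am E) ^+ l * Cm.
Definition RR E : 'M[L]_n := \sum_(l < k.+1) (Cm * Am E) ^+ l.

Lemma Qmat_QM E i j : Qmat chi y E i j = QMt E i j.
Proof.
rewrite /Qmat /walk_sum /QMt summxE; apply: eq_bigr => l _.
by rewrite -Wt_pow.
Qed.

Lemma MF_QMt E : MF 1 (QMt E).
Proof.
move=> i j; rewrite summxE; apply: Fm_sum => l _.
apply: (@FmW _ _ 1 (l + 1)); first by rewrite addn1.
by apply: MF_mul; [apply: MF_pow; apply: MF_N | apply: MF_Cm].
Qed.

Lemma QMt_RR E : QMt E = RR E * Cm.
Proof.
rewrite /RR mulr_suml big_ord_recr /=.
suff -> : (Cm * Am E) ^+ k * Cm = 0 by rewrite addr0.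
apply: MF_top; rewrite -addn1; apply: MF_mul MF_Cm.
by apply: MF_pow; apply: MF_N.
Qed.

Lemma RR_inv E : (1 - Cm * Am E) * RR E = 1 /\ RR E * (1 - Cm * Am E) = 1.
Proof.
have [h1 h2] := geom_inv (Cm * Am E) k.+1.
suff z : (Cm * Am E) ^+ k.+1 = 0 by rewrite /RR h1 h2 z subr0.
by apply: MF_top; apply: MF_pow; apply: MF_N.
Qed.

Lemma QM_res E E' : QMt E' = QMt E + QMt E' * (Am E' - Am E) * QMt E.
Proof.
rewrite !QMt_RR; apply: resolvent; [exact: (RR_inv E).1 | exact: (RR_inv E').2].
Qed.

Lemma Zall_Ztot E : Zall chi y E = Ztot chi y E.
Proof.
have -> : Ztot chi y E = \sum_(l < k) \sum_i \sum_j Wt chi y E l i j.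
  rewrite /Ztot /Qmat /walk_sum.
  under eq_bigr => i _ do rewrite exchange_big.
  by rewrite exchange_big.
rewrite /Zall /walk_sum; apply: eq_bigr => l _.
rewrite big_mkcond (@sum_tupleS _ _ l (fun s : seq 'I_n =>
  if is_walk E s && true then walk_extensor chi y s : L else 0)).
symmetry.
under eq_bigr => i _ do under eq_bigr => j _ do rewrite Wt_expand.
under eq_bigr => i _ do rewrite exchange_big.
rewrite exchange_big; apply: eq_bigr => x _.
under eq_bigr => i _ do rewrite exchange_big.
rewrite exchange_big; apply: eq_bigr => r _.
rewrite (@sum_collapseT _ _ x) => [|i ni]; last first.
  by apply: big1 => j _; rewrite /fW eq_sym (negbTE ni) andbF.
rewrite (@sum_collapseT _ _ (last x r)) => [|j nj]; last first.
  by rewrite /fW eq_sym (negbTE nj) !andbF.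
by rewrite /fW !eqxx.
Qed.
End Main.


Lemma sum_in_all (T : finType) (R : nmodType) (I : {pred T}) (f : T -> R) :
  (forall x, x \notin I -> f x = 0) -> \sum_(x in I) f x = \sum_x f x.
Proof.
move=> h; rewrite big_mkcond; apply: eq_bigr => x _.
by case: ifP => // /negbT /h ->.
Qed.

Lemma sum_QWQ (F : fieldType) (k n : nat) (A W B : 'M[Lam F k]_n) :
  \sum_i \sum_j (A * W * B) i j =
  \sum_a \sum_b (\sum_i A i a) * W a b * (\sum_j B b j).
Proof.
under eq_bigr => i _ do under eq_bigr => j _ do rewrite mulE.
under eq_bigr => i _ do under eq_bigr => j _ do under eq_bigr => b _ do
  rewrite mulE mulr_suml.
under [RHS]eq_bigr => a _ do under eq_bigr => b _ do rewrite mulr_suml mulr_suml.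
under [RHS]eq_bigr => a _ do under eq_bigr => b _ do under eq_bigr => i _ do
  rewrite mulr_sumr.
under eq_bigr => i _ do under eq_bigr => j _ do rewrite exchange_big.
under eq_bigr => i _ do rewrite exchange_big.
under eq_bigr => i _ do under eq_bigr => a _ do rewrite exchange_big.
rewrite exchange_big.
under eq_bigr => a _ do rewrite exchange_big.
done.
Qed.

Section Final.
Variables (F : fieldType) (k n : nat).
Variables (chi : 'I_n -> 'rV[F]_k) (y : 'I_n -> 'I_n -> F).
Variables (E Ep Em : {set 'I_n * 'I_n}).
Hypotheses (hEp : [disjoint Ep & E]) (hEm : Em \subset E).
Local Notation L := (Lam F k).
Local Notation Am := (@Am F k n y).
Local Notation I := (endpoints Ep Em).
Definition E' := (E :\: Em) :|: Ep.
Definition Dm : 'M[L]_n := Am E' - Am E.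
Local Notation Q := (QMt chi y E).

Lemma Dm_Delta i j : Dm i j = Delta k y Ep Em i j.
Proof.
rewrite /Dm /Delta !mxE /E' !inE.
case hp: ((i, j) \in Ep).
  have -> : ((i, j) \in E) = false by apply: (disjointFr hEp hp).
  by rewrite orbT subr0.
case hm: ((i, j) \in Em).
  have -> : ((i, j) \in E) = true by apply: (subsetP hEm).
  by rewrite /= sub0r -scN.
rewrite /=; case: ((i, j) \in E) => //; by rewrite subrr.
Qed.

Lemma Delta_row i j : i \notin I -> Delta k y Ep Em i j = 0.
Proof.
move=> hi; rewrite /Delta; case: ifP => [h|_].
  by case/negP: hi; rewrite inE; apply/existsP; exists j; rewrite inE h.
case: ifP => // h.
by case/negP: hi; rewrite inE; apply/existsP; exists j; rewrite inE h orbT.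
Qed.

Lemma Delta_col i j : j \notin I -> Delta k y Ep Em i j = 0.
Proof.
move=> hi; rewrite /Delta; case: ifP => [h|_].
  by case/negP: hi; rewrite inE; apply/existsP; exists i; rewrite !inE h orbT.
case: ifP => // h.
by case/negP: hi; rewrite inE; apply/existsP; exists i; rewrite !inE h !orbT.
Qed.

Lemma Dm_rowM (M : 'M[L]_n) a b : a \notin I -> (Dm * M) a b = 0.
Proof. by move=> ha; rewrite mulE big1 // => x _; rewrite Dm_Delta Delta_row // mul0r. Qed.

Lemma Dm_colM (M : 'M[L]_n) a b : b \notin I -> (M * Dm) a b = 0.
Proof. by move=> hb; rewrite mulE big1 // => x _; rewrite Dm_Delta Delta_col // mulr0. Qed.

Lemma DQpow_eq m a b : DQpow chi y E Ep Em m a b = (Dm * (Q * Dm) ^+ m) a b.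
Proof.
elim: m a b => [|m IH] a b; first by rewrite expr0 mulr1 Dm_Delta.
rewrite /= -/(DQpow chi y E Ep Em m) /mmul.
rewrite sum_in_all => [|l hl]; last first.
  by rewrite IH swapX Dm_colM // -mulLE mul0r.
rewrite exprSr mulrA mulE; apply: eq_bigr => l _.
rewrite IH mulLE; congr wedge.
rewrite sum_in_all => [|x hx]; last by rewrite Delta_row // -mulLE mulr0.
by rewrite mulE; apply: eq_bigr => x _; rewrite Qmat_QM Dm_Delta.
Qed.

Lemma corr m : \sum_i \sum_j (Q * (Dm * Q) ^+ m.+1) i j = correction_term chi y E Ep Em m.
Proof.
rewrite /correction_term; symmetry.
rewrite sum_in_all => [|a ha]; last first.
  by apply: big1 => b _; rewrite DQpow_eq Dm_rowM // -!mulLE mulr0 mul0r.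
have hz : forall a b, b \notin I ->
  wedge (wedge (Fvec chi y E a) (DQpow chi y E Ep Em m a b)) (Svec chi y E b) = 0.
  by move=> a b hb; rewrite DQpow_eq swapX Dm_colM // -!mulLE mulr0 mul0r.
under eq_bigr => a _ do rewrite (sum_in_all (hz a)).
under eq_bigr => a _ do under eq_bigr => b _ do
  rewrite DQpow_eq /Fvec /Svec -!mulLE.
symmetry; rewrite powS_sw mulrA sum_QWQ.
apply: eq_bigr => a _; apply: eq_bigr => b _.
congr (_ * _ * _); apply: eq_bigr => i _; by rewrite Qmat_QM.
Qed.

Lemma QMt_expand : QMt chi y E' = \sum_(m < k.+1) Q * (Dm * Q) ^+ m.
Proof.
have h : QMt chi y E' = Q + QMt chi y E' * Dm * Q by apply: QM_res.
rewrite {1}(iter_res h k.+1).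
suff -> : QMt chi y E' * (Dm * Q) ^+ k.+1 = 0 by rewrite addr0.
apply: MF_top; apply: (@MF_W _ _ _ k.+1 (1 + k.+1)) => //.
apply: MF_mul; first exact: MF_QMt.
apply: MF_pow; rewrite -[1%N]add0n; apply: MF_mul; [exact: MF_any | exact: MF_QMt].
Qed.

Theorem final :
  Zall chi y ((E :\: Em) :|: Ep) =
  Ztot chi y E + \sum_(i < k) correction_term chi y E Ep Em i.
Proof.
rewrite Zall_Ztot /Ztot -/E'.
under eq_bigr => i _ do under eq_bigr => j _ do rewrite Qmat_QM QMt_expand summxE.
under eq_bigr => i _ do rewrite exchange_big.
rewrite exchange_big big_ord_recl /=.
congr (_ + _).
  rewrite expr0 mulr1; apply: eq_bigr => i _; apply: eq_bigr => j _.
  by rewrite Qmat_QM.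
by apply: eq_bigr => m _; rewrite corr.
Qed.
End Final.


Theorem mainTheorem9 (F : fieldType) (k n : nat) (hk : (1 <= k)%N)
  (chi : 'I_n -> 'rV[F]_k) (y : 'I_n -> 'I_n -> F)
  (E Ep Em : {set 'I_n * 'I_n})
  (hEp : [disjoint Ep & E]) (hEm : Em \subset E) :
  Zall chi y ((E :\: Em) :|: Ep) =
  Ztot chi y E +
  \sum_(i < k) correction_term chi y E Ep Em i.
Proof. exact: final. Qed.
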